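(* For every positive integer $m$ and every distribution $\mathcal D$ on $[0,1]\times\{0,1\}$, $\mathsf{SCDL}_{2m}(\mathcal D)\ge\mathsf{SCDL}_m(\mathcal D)$.
   Context: For $x\in\mathbb R$ write $x_+=\max\{x,0\}$. For a distribution $\mathcal D$ of $(p,y)\in[0,1]\times\{0,1\}$, a positive integer $m$ and $i\in\{0,\ldots,m\}$, let $w_i(p)=(1-|mp-i|)_+$, $\pi_i=\mathbb E_{\mathcal D}[w_i(p)]$ and $q_i=\mathbb E_{\mathcal D}[w_i(p)y]/\pi_i$ (terms with $\pi_i=0$ are $0$). Define $$\mathsf{SCDL}_m(\mathcal D)=\max_{i=0,\ldots,m}\Big(\sum_{j=0}^{i}\pi_j\big(q_j-\tfrac{i+1}{m}\big)_+ +\sum_{j=i+1}^{m}\pi_j\big(\tfrac im-q_j\big)_+\Big).$$ *)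

(* Defs.v *)
From HB Require Import structures.
From mathcomp Require Import all_boot all_order all_algebra.
From mathcomp Require Import all_classical all_reals all_analysis.
Set Implicit Arguments. Unset Strict Implicit. Unset Printing Implicit Defensive.
Import Order.TTheory GRing.Theory Num.Theory.
Local Open Scope ring_scope.

(* The joint distribution D of (p, y) is represented as the law of a pair of
   real random variables (p, y) on a probability space (T, P), with
   p in [0,1] and y in {0,1}. *)

Section SCDL.
Context {R : realType} {d : measure_display} {T : measurableType d}.

Definition pos (x : R) : R := Num.max x 0.

Definition wfun (m i : nat) (x : R) : R := pos (1 - `|m%:R * x - i%:R|).

Definition piw (P : probability T R) (p : T -> R) (m i : nat) : R :=
  Rintegral P setT (fun t => wfun m i (p t)).

Definition qw (P : probability T R) (p y : T -> R) (m i : nat) : R :=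
  if piw P p m i == 0 then 0
  else Rintegral P setT (fun t => wfun m i (p t) * y t) / piw P p m i.

Definition SCDL_term (P : probability T R) (p y : T -> R) (m i : nat) : R :=
  \sum_(j < m.+1 | (j <= i)%N)
      piw P p m j * pos (qw P p y m j - i.+1%:R / m%:R)
  + \sum_(j < m.+1 | (i < j)%N)
      piw P p m j * pos (i%:R / m%:R - qw P p y m j).

(* SCDL_m(D) = max_{i = 0..m} SCDL_term i.  All terms are >= 0, so using 0
   as the neutral element of the (nonempty) max is harmless. *)
Definition SCDL (P : probability T R) (p y : T -> R) (m : nat) : R :=
  \big[Num.max/0]_(i < m.+1) SCDL_term P p y m i.

End SCDL.

(* Main.v *)
Require Import Defs.
From HB Require Import structures.
From mathcomp Require Import all_boot all_order all_algebra.
From mathcomp Require Import all_classical all_reals all_analysis.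
From mathcomp Require Import zify ring lra.
Import Order.TTheory GRing.Theory Num.Theory.
Local Open Scope ring_scope.


Lemma pos_id {R : realType} (x : R) : 0 <= x -> pos x = x.
Proof. by move=> h; rewrite /pos max_l. Qed.
Lemma pos_0 {R : realType} (x : R) : x <= 0 -> pos x = 0.
Proof. by move=> h; rewrite /pos max_r. Qed.

Ltac elim_all := repeat match goal with
  | |- context [`|?a|] =>
  let H := fresh "H" in case: (lerP 0 a) => H;
  [rewrite (ger0_norm H) | rewrite (ltr0_norm H)]; try (exfalso; lra)
  | |- context [pos ?a] =>
  let H := fresh "H" in case: (lerP 0 a) => H;
  [rewrite (pos_id _ H) | rewrite (pos_0 _ (ltW H))]; try (exfalso; lra) end.

Section Arith.
Context {R : realType}.
Implicit Types (x u a b c e : R).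

Lemma pos_ge0 x : 0 <= pos x.
Proof. by elim_all; lra. Qed.

Lemma pos_mul a x : 0 <= a -> a * pos x = pos (a * x).
Proof.
move=> ha; case: (lerP 0 x) => hx.
  by rewrite !pos_id // mulr_ge0.
by rewrite !pos_0 ?mulr0 // ?mulr_ge0_le0 // ltW.
Qed.

Lemma pos_add a b : pos (a + b) <= pos a + pos b.
Proof. by elim_all; lra. Qed.

Lemma pos_dec a b c e : 0 <= e ->
  pos (a + 1/2 * b + e * c) <= pos a + 1/2 * pos b + e * pos c.
Proof.
move=> he; have h2 : (0:R) <= 1/2 by lra.
rewrite (pos_mul _ b h2) (pos_mul _ c he).
apply: le_trans (pos_add _ _) _; rewrite lerD2r.
exact: pos_add.
Qed.

Lemma pos_mono a b : a <= b -> pos a <= pos b.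
Proof. by move=> h; elim_all; lra. Qed.

Lemma hat_id u : pos (1 - `|u|) = pos (1 - `|2*u|) + 1/2 * pos (1 - `|2*u - 1|)
   + 1/2 * pos (1 - `|2*u + 1|).
Proof. by elim_all; lra. Qed.

Lemma hat_zero u : 0 <= u -> pos (1 - `|2*u + 1|) = 0.
Proof. by move=> h; elim_all; lra. Qed.

Lemma w_bnd n l x : 0 <= wfun n l x <= 1.
Proof. rewrite /wfun; elim_all; lra. Qed.

End Arith.



Section Sums.
Context {R : realType}.

Definition bj (j : nat) : R := if j is 0 then 0 else 1/2.

Lemma bj_ge0 j : 0 <= bj j.
Proof. by case: j => [|j] /=; lra. Qed.

Lemma E1 (F : nat -> R) i :
  \sum_(0 <= j < i.+1) (F (2 * j)%N + 1/2 * F (2 * j+1)%N + bj j * F (2 * j-1)%N)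
  = \sum_(0 <= l < (2 * i).+1) F l + 1/2 * F (2 * i+1)%N.
Proof.
elim: i => [|i IH].
  by rewrite !big_nat1 /= mul0r addr0.
rewrite big_nat_recr //= IH.
have -> : (2 * i.+1).+1 = (2 * i).+1.+2 by lia.
rewrite !big_nat_recr //=.
have -> : (2 * i.+1 - 1 = 2 * i + 1)%N by lia.
have -> : (2 * i.+1 + 1 = (2 * i).+3)%N by lia.
have -> : (2 * i.+1 = (2 * i).+2)%N by lia.
have -> : (2 * i + 1 = (2 * i).+1)%N by lia.
lra.
Qed.

Lemma sum_le N k (F : nat -> R) : (k < N)%N ->
  \sum_(l < N | (l <= k)%N) F l = \sum_(0 <= l < k.+1) F l.
Proof.
move=> h; rewrite big_mkord (big_ord_widen N F h).
by apply: eq_bigl => l; rewrite ltnS.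
Qed.

Lemma sum_gt N k (F : nat -> R) : (k < N)%N ->
  \sum_(l < N | (k < l)%N) F l
  = \sum_(0 <= l < N) F l - \sum_(0 <= l < k.+1) F l.
Proof.
move=> h; rewrite -(sum_le _ _ F h) big_mkord.
rewrite [X in _ = X - _](bigID (fun l : 'I_N => (l <= k)%N)) /=.
rewrite addrAC subrr add0r; apply: eq_bigl => l; by rewrite ltnNge.
Qed.

Lemma frac_le (a b n : nat) : (a <= b)%N -> a%:R / n%:R <= b%:R / n%:R :> R.
Proof. by move=> h; rewrite ler_wpM2r // ?invr_ge0 ?ler0n // ler_nat. Qed.

Lemma frac2 (a n : nat) : (0 < n)%N -> (2*a)%:R / (2*n)%:R = a%:R / n%:R :> R.
Proof.
move=> hn; have hn' : n%:R != 0 :> R by rewrite pnatr_eq0 -lt0n.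
rewrite !natrM; field; exact: hn'.
Qed.

Definition Tsum (C : nat -> R -> R) (n i : nat) : R :=
  \sum_(j < n.+1 | (j <= i)%N) pos (C j (i.+1%:R / n%:R))
  + \sum_(j < n.+1 | (i < j)%N) pos (- C j (i%:R / n%:R)).

Lemma main_comb (m : nat) (hm : (0 < m)%N) (C c : nat -> R -> R)
  (dec : forall j t, C j t = c (2 * j)%N t + 1/2 * c (2 * j+1)%N t + bj j * c (2 * j-1)%N t)
  (mono : forall l s t, s <= t -> c l t <= c l s)
  (zero : forall t, c (2 * m+1)%N t = 0) :
  \big[Num.max/0]_(i < m.+1) Tsum C m i <= \big[Num.max/0]_(k < (2 * m).+1) Tsum c (2 * m) k.
Proof.
set RHS := \big[Num.max/0]_(k < (2 * m).+1) Tsum c (2 * m) k.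
have T2le : forall k, (k < (2 * m).+1)%N -> Tsum c (2 * m) k <= RHS.
  by move=> k hk; exact: (le_bigmax 0 (fun k : 'I_(2 * m).+1 => Tsum c (2 * m) k) (Ordinal hk)).
have T20 : 0 <= RHS.
  apply: le_trans (T2le 0%N _) => //.
  by rewrite /Tsum addr_ge0 // sumr_ge0 // => j _; exact: pos_ge0.
apply: bigmax_le => //= -[i hi] _ /=.
pose t1 : R := i.+1%:R / m%:R; pose t2 : R := i%:R / m%:R.
pose G := fun l => pos (c l t1); pose H := fun l => pos (- c l t2).
have him : (i <= m)%N by lia.
have S1 : \sum_(j < m.+1 | (j <= i)%N) pos (C j t1)
   <= \sum_(0 <= l < (2 * i).+1) G l + 1/2 * G (2 * i+1)%N.
  rewrite (sum_le _ _ (fun j => pos (C j t1))) // -(E1 G); apply: ler_sum => j _; rewrite dec; exact: pos_dec (bj_ge0 j).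
have S2 : \sum_(j < m.+1 | (i < j)%N) pos (- C j t2)
   <= (\sum_(0 <= l < (2 * m).+1) H l + 1/2 * H (2 * m+1)%N)
      - (\sum_(0 <= l < (2 * i).+1) H l + 1/2 * H (2 * i+1)%N).
  rewrite -(E1 H) -(E1 H).
  rewrite -(sum_gt _ _ (fun j => H (2 * j)%N + 1 / 2 * H (2 * j + 1)%N + bj j * H (2 * j - 1)%N)) //.
  apply: ler_sum => j _; rewrite dec.
  have -> : - (c (2 * j)%N t2 + 1 / 2 * c (2 * j + 1)%N t2 + bj j * c (2 * j - 1)%N t2)
    = - c (2 * j)%N t2 + 1 / 2 * (- c (2 * j + 1)%N t2) + bj j * (- c (2 * j - 1)%N t2) by ring.
  exact: pos_dec (bj_ge0 j).
have H0 : H (2 * m+1)%N = 0 by rewrite /H zero oppr0 pos_0.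
have Tm : Tsum C m i <= \sum_(0 <= l < (2 * i).+1) G l + 1/2 * G (2 * i+1)%N
   + \sum_(0 <= l < (2 * m).+1) H l - \sum_(0 <= l < (2 * i).+1) H l - 1/2 * H (2 * i+1)%N.
  rewrite /Tsum -/t1 -/t2; move: S1 S2; rewrite H0; lra.
have A1 : \sum_(0 <= l < (2 * i).+1) G l + (\sum_(0 <= l < (2 * m).+1) H l
          - \sum_(0 <= l < (2 * i).+1) H l) <= Tsum c (2 * m) (2 * i).
  have h2i : (2 * i < (2 * m).+1)%N by lia.
  rewrite /Tsum -(sum_le _ _ G h2i) -(sum_gt _ _ H h2i); apply: lerD.
    apply: ler_sum => l _; apply: pos_mono; apply: mono.
    rewrite /t1 -(frac2 i.+1 m hm); apply: frac_le; lia.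
  by apply: ler_sum => l _; rewrite frac2 // /H /t2 lexx.
have Hk : (2 * i < (2 * m).+1)%N by lia.
have {}A1 := le_trans A1 (T2le _ Hk).
case: (ltnP i m) => him2; last first.
  have eim : i = m by lia.
  subst i.
  have G0 : G (2 * m + 1)%N = 0 by rewrite /G zero pos_0.
  apply: le_trans Tm _; apply: le_trans A1; lra.
have Hk2 : (2 * i + 1 < (2 * m).+1)%N by lia.
have A2 : \sum_(0 <= l < (2 * i).+1) G l + G (2 * i + 1)%N + (\sum_(0 <= l < (2 * m).+1) H l
          - \sum_(0 <= l < (2 * i).+1) H l - H (2 * i + 1)%N) <= Tsum c (2 * m) (2 * i + 1).
  rewrite /Tsum.
  have -> : ((2 * i + 1).+1%:R / (2 * m)%:R = t1 :> R).
    by rewrite /t1 -(frac2 i.+1 m hm); congr (_%:R / _); lia.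
  rewrite (sum_le _ _ G Hk2).
  have e2 : ((2 * i + 1).+1 = (2 * i).+2)%N by lia.
  have e3 : (2 * i + 1 = (2 * i).+1)%N by lia.
  have r1 : forall F : nat -> R, \sum_(0 <= l < (2 * i).+2) F l
     = \sum_(0 <= l < (2 * i).+1) F l + F (2 * i).+1 by move=> F; rewrite big_nat_recr.
  rewrite e2 (r1 G) e3.
  have hh : \sum_(j < (2 * m).+1 | (2 * i + 1 < j)%N) H j
     <= \sum_(j < (2 * m).+1 | (2 * i + 1 < j)%N) pos (- c j ((2 * i + 1)%:R / (2 * m)%:R)).
    apply: ler_sum => l _; apply: pos_mono; rewrite lerN2; apply: mono.
    rewrite /t2 -(frac2 i m hm); apply: frac_le; lia.
  rewrite (sum_gt _ _ H Hk2) e2 (r1 H) in hh.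
  rewrite e3 in hh; lra.
have {}A2 := le_trans A2 (T2le _ Hk2).
apply: le_trans Tm _; lra.
Qed.

End Sums.



Section Integ.
Context {R : realType} {d : measure_display} {T : measurableType d}.
Context (P : probability T R) (p y : T -> R).
Context (mp : measurable_fun setT p) (my : measurable_fun setT y).
Context (hp : forall t, 0 <= p t <= 1) (hy : forall t, y t = 0 \/ y t = 1).

Lemma bint (f : T -> R) :
  measurable_fun setT f -> (forall t, `|f t| <= 1) ->
  P.-integrable setT (EFin \o f).
Proof.
move=> mf fb; apply: measurable_bounded_integrable => //.
  by apply: (le_lt_trans (probability_le1 P _)) => //; rewrite ltry.
exists 1; split => // M HM x _ /=; exact: le_trans (fb x) (ltW HM).
Qed.

Lemma mw n l : measurable_fun setT (fun t => wfun n l (p t)).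
Proof.
rewrite /wfun /pos.
apply: (measurable_realfun.measurable_maxr (f := fun t => 1 - `|n%:R * p t - l%:R|) (g := fun _ => 0)); last exact: measurable_cst.
apply: measurable_realfun.measurable_funB; first exact: measurable_cst.
apply: measurableT_comp => //.
apply: measurable_realfun.measurable_funB; last exact: measurable_cst.
apply: measurable_realfun.measurable_funM => //; exact: measurable_cst.
Qed.

Lemma iw n l : P.-integrable setT (EFin \o (fun t => wfun n l (p t))).
Proof.
apply: bint; first exact: mw.
by move=> t; have := w_bnd n l (p t); move=> /andP[h1 h2]; rewrite ger0_norm.
Qed.

Lemma iwy n l : P.-integrable setT (EFin \o (fun t => wfun n l (p t) * y t)).
Proof.
apply: bint; first by apply: measurable_realfun.measurable_funM => //; exact: mw.
move=> t; have := w_bnd n l (p t); move=> /andP[h1 h2].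
by case: (hy t) => ->; rewrite ?mulr0 ?mulr1 ?normr0 // ger0_norm.
Qed.

Definition I1 n l := Rintegral P setT (fun t => wfun n l (p t) * y t).
Definition cc n l (t : R) := I1 n l - t * piw P p n l.

Lemma I0_ge0 n l : 0 <= piw P p n l.
Proof. apply: Rintegral_ge0 => x _; by have /andP[] := w_bnd n l (p x). Qed.

Lemma I1_bnd n l : 0 <= I1 n l <= piw P p n l.
Proof.
apply/andP; split.
  apply: Rintegral_ge0 => x _; have /andP[h1 _] := w_bnd n l (p x).
  by case: (hy x) => ->; rewrite ?mulr0 ?mulr1.
apply: le_Rintegral => //; [exact: iwy | exact: iw |] => x _.
have /andP[h1 _] := w_bnd n l (p x).
by case: (hy x) => ->; rewrite ?mulr0 ?mulr1.
Qed.

Lemma L2a n l t : piw P p n l * pos (qw P p y n l - t) = pos (cc n l t).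
Proof.
rewrite /qw /cc -/(I1 n l); have := I1_bnd n l; have := I0_ge0 n l.
case: eqP => [->|h0] h1 /andP[h2 h3].
  have -> : I1 n l = 0 by apply/eqP; rewrite eq_le h3 h2.
  by rewrite mul0r mulr0 subr0 pos_0.
rewrite pos_mul // mulrBr mulrCA divff ?mulr1 1?mulrC //; exact/eqP.
Qed.

Lemma L2b n l t : piw P p n l * pos (t - qw P p y n l) = pos (- cc n l t).
Proof.
rewrite /qw /cc -/(I1 n l); have := I1_bnd n l; have := I0_ge0 n l.
case: eqP => [->|h0] h1 /andP[h2 h3].
  have -> : I1 n l = 0 by apply/eqP; rewrite eq_le h3 h2.
  by rewrite mul0r mulr0 subr0 oppr0 pos_0.
rewrite pos_mul // mulrBr mulrCA divff ?mulr1; last exact/eqP.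
by congr pos; ring.
Qed.


Lemma wdec m j (x : R) : 0 <= x -> wfun m j x = wfun (2 * m) (2 * j) x
  + 1/2 * wfun (2 * m) (2 * j + 1) x + bj j * wfun (2 * m) (2 * j - 1) x.
Proof.
move=> hx; rewrite /wfun.
have e1 : (2 * m)%:R * x - (2 * j)%:R = 2 * (m%:R * x - j%:R) :> R.
  by rewrite !natrM; ring.
have e2 : (2 * m)%:R * x - (2 * j + 1)%:R = 2 * (m%:R * x - j%:R) - 1 :> R.
  by rewrite natrD !natrM; ring.
rewrite e1 e2 hat_id; case: j e1 e2 => [|k] _ _ /=.
  rewrite hat_zero ?mulr0 ?mul0r // subr0 mulr_ge0 //.
have e3 : (2 * m)%:R * x - (2 * k.+1 - 1)%:R = 2 * (m%:R * x - k.+1%:R) + 1 :> R.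
  have -> : (2 * k.+1 - 1 = 2 * k + 1)%N by lia.
  by rewrite natrD !natrM -addn1 natrD; ring.
by rewrite e3.
Qed.

Lemma iD (f g : T -> R) : P.-integrable setT (EFin \o f) -> P.-integrable setT (EFin \o g) ->
  P.-integrable setT (EFin \o (fun t => f t + g t)).
Proof.
move=> hf hg; apply: (eq_integrable measurableT _ _ _ (integrableD measurableT hf hg)).
by move=> t _; rewrite /= EFinD.
Qed.

Lemma iZ a (f : T -> R) : P.-integrable setT (EFin \o f) ->
  P.-integrable setT (EFin \o (fun t => a * f t)).
Proof.
move=> hf; apply: (eq_integrable measurableT _ _ _ (integrableZl measurableT a hf)).
by move=> t _; rewrite /= EFinM.
Qed.

Lemma lin3 (f g h k : T -> R) a b :
  P.-integrable setT (EFin \o f) -> P.-integrable setT (EFin \o g) ->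
  P.-integrable setT (EFin \o h) ->
  (forall t, k t = f t + a * g t + b * h t) ->
  Rintegral P setT k = Rintegral P setT f + a * Rintegral P setT g + b * Rintegral P setT h.
Proof.
move=> hf hg hh hk.
have -> : Rintegral P setT k = Rintegral P setT (fun t => f t + a * g t + b * h t).
  by apply: eq_Rintegral => t _; exact: hk.
rewrite RintegralD //; last exact: iZ.
  rewrite RintegralD //; last exact: iZ.
  by rewrite !RintegralZl.
by apply: iD => //; exact: iZ.
Qed.

Lemma I0dec m j : piw P p m j = piw P p (2 * m) (2 * j) + 1/2 * piw P p (2 * m) (2 * j + 1)
   + bj j * piw P p (2 * m) (2 * j - 1).
Proof.
apply: lin3; try exact: iw.
by move=> t; rewrite (wdec m j (p t)) //; case/andP: (hp t).
Qed.

Lemma I1dec m j : I1 m j = I1 (2 * m) (2 * j) + 1/2 * I1 (2 * m) (2 * j + 1)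
   + bj j * I1 (2 * m) (2 * j - 1).
Proof.
apply: lin3; try exact: iwy.
move=> t; rewrite (wdec m j (p t)); last by case/andP: (hp t).
ring.
Qed.

Lemma ccdec m j t : cc m j t = cc (2 * m) (2 * j) t + 1/2 * cc (2 * m) (2 * j + 1) t
   + bj j * cc (2 * m) (2 * j - 1) t.
Proof. rewrite /cc I0dec I1dec; ring. Qed.

Lemma cc_mono n l s t : s <= t -> cc n l t <= cc n l s.
Proof. by move=> h; rewrite /cc lerD2l lerN2 ler_wpM2r // I0_ge0. Qed.

Lemma w_zero m (x : R) : 0 <= x <= 1 -> wfun (2 * m) (2 * m + 1) x = 0.
Proof.
move=> /andP[h0 h1]; rewrite /wfun.
have h : (2 * m)%:R * x <= (2 * m)%:R :> R.
  by rewrite -[X in _ <= X]mulr1 ler_wpM2l // ler0n.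
rewrite natrD; move: h; set a := (2 * m)%:R * x; set b : R := (2 * m)%:R.
move=> h; elim_all; lra.
Qed.

Lemma cc_zero m t : cc (2 * m) (2 * m + 1) t = 0.
Proof.
have z1 : piw P p (2 * m) (2 * m + 1) = 0.
  rewrite /piw (_ : Rintegral _ _ _ = Rintegral P setT (fun _ => 0)); last first.
    by apply: eq_Rintegral => x _; rewrite w_zero.
  by rewrite Rintegral_cst // mul0r.
have z2 : I1 (2 * m) (2 * m + 1) = 0.
  rewrite /I1 (_ : Rintegral _ _ _ = Rintegral P setT (fun _ => 0)); last first.
    by apply: eq_Rintegral => x _; rewrite w_zero ?mul0r.
  by rewrite Rintegral_cst // mul0r.
by rewrite /cc z1 z2 mulr0 subr0.
Qed.

Lemma SCDL_eq m : SCDL P p y m = \big[Num.max/0]_(i < m.+1) Tsum (cc m) m i.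
Proof.
rewrite /SCDL; apply: eq_bigr => i _; rewrite /SCDL_term /Tsum.
by congr (_ + _); apply: eq_bigr => j _; rewrite ?L2a ?L2b.
Qed.

End Integ.



Theorem lemma3p3 (R : realType) (d : measure_display) (T : measurableType d)
  (P : probability T R) (p y : {RV P >-> R})
  (hp : forall t, 0 <= p t <= 1) (hy : forall t, y t = 0 \/ y t = 1)
  (m : nat) (hm : (0 < m)%N) :
  SCDL P p y m <= SCDL P p y (2 * m)%N.
Proof.
have mp : measurable_fun setT p by exact: measurable_funPT.
have my : measurable_fun setT y by exact: measurable_funPT.
rewrite !(SCDL_eq P p y mp my hy).
apply: main_comb => //.
- exact: (ccdec P p y mp my hp hy).
- exact: cc_mono.
- exact: (cc_zero P p y hp).
Qed.
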